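(* Let $V$ be a finite-dimensional vector space over $\mathbb{F}_2$ with nondegenerate quadratic form $Q$ and associated bilinear form $B$. Let $W$ be a subspace of $V$ of dimension $d\ge 2$ with $d\equiv 2\pmod 4$ such that $W$ has a symmetric basis (with respect to the restriction of $Q$). Suppose $\{a,b\},\{c,d'\},\{g,h\}$ are three hyperbolic pairs contained in $W^{\perp}\setminus W$ which are pairwise perpendicular (every vector of one pair is orthogonal under $B$ to every vector of each other pair). Let $W'=W\perp\langle a,b\rangle\perp\langle c,d'\rangle\perp\langle g,h\rangle$. Then $W'$ has a symmetric basis.
   Context: The associated bilinear form of $Q$ is $B(u,v)=Q(u+v)-Q(u)-Q(v)$. $W^\perp=\{v\in V: B(w,v)=0\ \forall w\in W\}$. A pair $\{u,v\}$ of distinct vectors is a hyperbolic pair if $Q(u)=Q(v)=0$ and $B(u,v)=1$. A basis $\{v_1,\dots,v_m\}$ of a subspace is symmetric if $Q(v_i)=0$ for all $i$ and $B(v_i,v_j)=1$ for all $i\ne j$. *)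

(* Defs.v *)
From HB Require Import structures.
From mathcomp Require Import all_boot all_order all_algebra.
Set Implicit Arguments. Unset Strict Implicit. Unset Printing Implicit Defensive.
Import GRing.Theory.
Local Open Scope ring_scope.

Definition assoc_bil {V : vectType 'F_2} (Q : V -> 'F_2) (u v : V) : 'F_2 :=
  Q (u + v) - Q u - Q v.

(* Q is a quadratic form: Q(k v) = k^2 Q(v) and B is bilinear
   (additive in the first argument; B is symmetric by definition and
   F_2-linearity follows from additivity). *)
Definition quadratic_form {V : vectType 'F_2} (Q : V -> 'F_2) : Prop :=
  (forall (k : 'F_2) (v : V), Q (k *: v) = k ^+ 2 * Q v) /\
  (forall u v w : V, assoc_bil Q (u + v) w = assoc_bil Q u w + assoc_bil Q v w).

Definition nondeg_qform {V : vectType 'F_2} (Q : V -> 'F_2) : Prop :=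
  forall v : V, (forall w : V, assoc_bil Q v w = 0) -> Q v = 0 -> v = 0.

Definition in_perp {V : vectType 'F_2} (Q : V -> 'F_2) (W : {vspace V}) (v : V) : Prop :=
  forall w : V, w \in W -> assoc_bil Q w v = 0.

Definition hyperbolic_pair {V : vectType 'F_2} (Q : V -> 'F_2) (u v : V) : Prop :=
  u != v /\ Q u = 0 /\ Q v = 0 /\ assoc_bil Q u v = 1.

Definition has_symmetric_basis {V : vectType 'F_2} (Q : V -> 'F_2) (W : {vspace V}) : Prop :=
  exists X : seq V, basis_of W X /\
    (forall i, (i < size X)%N -> Q X`_i = 0) /\
    (forall i j, (i < size X)%N -> (j < size X)%N -> i != j -> assoc_bil Q X`_i X`_j = 1).

Definition pairs_perp {V : vectType 'F_2} (Q : V -> 'F_2) (a b c d : V) : Prop :=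
  assoc_bil Q a c = 0 /\ assoc_bil Q a d = 0 /\ assoc_bil Q b c = 0 /\ assoc_bil Q b d = 0.

(* Main.v *)
Require Import Defs.
From HB Require Import structures.
From mathcomp Require Import all_boot all_order all_algebra.
From mathcomp Require Import ring zify.
Import GRing.Theory.
Local Open Scope ring_scope.

Lemma F2_cases (x : 'F_2) : x = 0 \/ x = 1.
Proof.
case: x => [[|[|n]] Hn]; [left|right|]; try by apply/val_inj.
by [].
Qed.

Lemma F2_double (x : 'F_2) : x + x = 0.
Proof. by case: (F2_cases x) => ->; apply/eqP. Qed.

Lemma natF2 m : (m%:R : 'F_2) = (odd m)%:R.
Proof.
elim: m => [//|m IH]; rewrite mulrS IH /=.
by case: (odd m) => /=; [apply/eqP | rewrite addr0].
Qed.

Section Gen.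
Variable (V : vectType 'F_2) (Q : V -> 'F_2).
Hypothesis HQ : quadratic_form Q.
Local Notation B := (assoc_bil Q).

Lemma QD u v : Q (u + v) = Q u + Q v + B u v.
Proof. rewrite /assoc_bil; ring. Qed.

Lemma Bsym u v : B u v = B v u.
Proof. rewrite /assoc_bil (addrC u v); ring. Qed.

Lemma BDl u v w : B (u + v) w = B u w + B v w.
Proof. exact: HQ.2. Qed.

Lemma BDr u v w : B w (u + v) = B w u + B w v.
Proof. by rewrite Bsym BDl !(Bsym w). Qed.

Lemma B0l w : B 0 w = 0.
Proof.
have := BDl 0 0 w; rewrite addr0 F2_double => H.
by rewrite {1}H.
Qed.

Lemma B0r w : B w 0 = 0.
Proof. by rewrite Bsym B0l. Qed.

Lemma Q0 : Q 0 = 0.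
Proof. by have := HQ.1 0 0; rewrite scale0r => ->; rewrite expr2 !mul0r. Qed.

Lemma Bxx x : B x x = 0.
Proof.
rewrite /assoc_bil.
have -> : x + x = 0 by rewrite -[x]scale1r -scalerDl F2_double scale0r.
by rewrite Q0 sub0r -opprD F2_double oppr0.
Qed.

Lemma BZl k u w : B (k *: u) w = k * B u w.
Proof. by case: (F2_cases k) => ->; rewrite ?scale0r ?B0l ?mul0r ?scale1r ?mul1r. Qed.

Lemma Bsuml n (F : 'I_n -> V) w :
  B (\sum_(i < n) F i) w = \sum_(i < n) B (F i) w.
Proof. exact: (big_morph (fun u => B u w) (fun u v => BDl u v w) (B0l w)). Qed.

Lemma free_sym (Z : seq V) : ~~ odd (size Z) ->
  (forall i j, (i < size Z)%N -> (j < size Z)%N -> i != j -> B Z`_i Z`_j = 1) ->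
  free Z.
Proof.
move=> Hodd HZ.
suff : free (in_tuple Z) by []. apply/freeP => /= k Hk.
set m := size Z in Hodd HZ k Hk *.
have Hj : forall j : 'I_m, k j = \sum_(i < m) k i.
  move=> j; have := congr1 (fun u => B u Z`_j) Hk.
  rewrite /= B0l Bsuml (eq_bigr (fun i => k i * B Z`_i Z`_j)); last first.
    by move=> i _; apply: BZl.
  rewrite (bigD1 j) //= Bxx mulr0 add0r.
  under eq_bigr => i Hi do rewrite HZ // mulr1.
  move=> H.
  by rewrite (bigD1 j) //= H addr0.
have HS : \sum_(i < m) k i = 0.
  have : \sum_(i < m) k i = \sum_(i < m) (\sum_(l < m) k l).
    by apply: eq_bigr => j _; exact: Hj.
  by rewrite sumr_const card_ord -mulr_natr natF2 (negbTE Hodd) mulr0.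
by move=> i; rewrite Hj HS.
Qed.

Definition hs (a b c d g h : V) : seq V :=
  [:: g + h; c + d + h; b + c + d + g; a + c + d + g; a + b + g; a + b + d + h].

Lemma perp_part (a b c d g h y : V) :
  (forall x, x \in [:: a; b; c; d; g; h] -> B y x = 0) ->
  forall k, B y (hs a b c d g h)`_k = 0.
Proof.
move=> H.
have Ha : B y a = 0 by apply: H; rewrite !inE eqxx.
have Hb : B y b = 0 by apply: H; rewrite !inE eqxx !orbT.
have Hc : B y c = 0 by apply: H; rewrite !inE eqxx !orbT.
have Hd : B y d = 0 by apply: H; rewrite !inE eqxx !orbT.
have Hg : B y g = 0 by apply: H; rewrite !inE eqxx !orbT.
have Hh : B y h = 0 by apply: H; rewrite !inE eqxx !orbT.
case=> [|[|[|[|[|[|k]]]]]] /=; rewrite ?BDr ?Ha ?Hb ?Hc ?Hd ?Hg ?Hh ?addr0 //.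
by rewrite nth_nil B0r.
Qed.

Lemma six_part (a b c d g h s : V) :
  hyperbolic_pair Q a b -> hyperbolic_pair Q c d -> hyperbolic_pair Q g h ->
  pairs_perp Q a b c d -> pairs_perp Q a b g h -> pairs_perp Q c d g h ->
  Q s = 1 -> (forall x, x \in [:: a; b; c; d; g; h] -> B s x = 0) ->
  forall k l, (k < 6)%N -> (l < 6)%N ->
  Q (s + (hs a b c d g h)`_k) = 0 /\
  (k != l -> B (s + (hs a b c d g h)`_k) (s + (hs a b c d g h)`_l) = 1).
Proof.
case=> _ [Qa [Qb Bab]]; case=> _ [Qc [Qd Bcd]]; case=> _ [Qg [Qh Bgh]].
case=> [Bac [Bad [Bbc Bbd]]]; case=> [Bag [Bah [Bbg Bbh]]].
case=> [Bcg [Bch [Bdg Bdh]]] Qs H.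
have Bsa : B s a = 0 by apply: H; rewrite !inE eqxx.
have Bsb : B s b = 0 by apply: H; rewrite !inE eqxx !orbT.
have Bsc : B s c = 0 by apply: H; rewrite !inE eqxx !orbT.
have Bsd : B s d = 0 by apply: H; rewrite !inE eqxx !orbT.
have Bsg : B s g = 0 by apply: H; rewrite !inE eqxx !orbT.
have Bsh : B s h = 0 by apply: H; rewrite !inE eqxx !orbT.
have Bas := etrans (Bsym _ _) Bsa. have Bbs := etrans (Bsym _ _) Bsb.
have Bcs := etrans (Bsym _ _) Bsc. have Bds := etrans (Bsym _ _) Bsd.
have Bgs := etrans (Bsym _ _) Bsg. have Bhs := etrans (Bsym _ _) Bsh.
have Bba := etrans (Bsym _ _) Bab. have Bdc := etrans (Bsym _ _) Bcd.
have Bhg := etrans (Bsym _ _) Bgh.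
have Bca := etrans (Bsym _ _) Bac. have Bda := etrans (Bsym _ _) Bad.
have Bcb := etrans (Bsym _ _) Bbc. have Bdb := etrans (Bsym _ _) Bbd.
have Bga := etrans (Bsym _ _) Bag. have Bha := etrans (Bsym _ _) Bah.
have Bgb := etrans (Bsym _ _) Bbg. have Bhb := etrans (Bsym _ _) Bbh.
have Bgc := etrans (Bsym _ _) Bcg. have Bhc := etrans (Bsym _ _) Bch.
have Bgd := etrans (Bsym _ _) Bdg. have Bhd := etrans (Bsym _ _) Bdh.
move=> k l Hk Hl; split.
  case: k Hk => [|[|[|[|[|[|k]]]]]] Hk //=;
  rewrite ?QD ?BDl ?BDr ?Bxx ?Qs ?Qa ?Qb ?Qc ?Qd ?Qg ?Qh
    ?Bab ?Bcd ?Bgh ?Bac ?Bad ?Bbc ?Bbd ?Bag ?Bah ?Bbg ?Bbh ?Bcg ?Bch ?Bdg ?Bdh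
    ?Bba ?Bdc ?Bhg ?Bca ?Bda ?Bcb ?Bdb ?Bga ?Bha ?Bgb ?Bhb ?Bgc ?Bhc ?Bgd ?Bhd
    ?Bsa ?Bsb ?Bsc ?Bsd ?Bsg ?Bsh ?Bas ?Bbs ?Bcs ?Bds ?Bgs ?Bhs;
  by apply/eqP.
move=> Hne.
case: k Hk Hne => [|[|[|[|[|[|k]]]]]] Hk //=;
case: l Hl => [|[|[|[|[|[|l]]]]]] Hl //= Hne;
rewrite ?QD ?BDl ?BDr ?Bxx ?Qs ?Qa ?Qb ?Qc ?Qd ?Qg ?Qh
    ?Bab ?Bcd ?Bgh ?Bac ?Bad ?Bbc ?Bbd ?Bag ?Bah ?Bbg ?Bbh ?Bcg ?Bch ?Bdg ?Bdh
    ?Bba ?Bdc ?Bhg ?Bca ?Bda ?Bcb ?Bdb ?Bga ?Bha ?Bgb ?Bhb ?Bgc ?Bhc ?Bgd ?Bhd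
    ?Bsa ?Bsb ?Bsc ?Bsd ?Bsg ?Bsh ?Bas ?Bbs ?Bcs ?Bds ?Bgs ?Bhs;
by apply/eqP.
Qed.

End Gen.
Arguments hs {V}.
Arguments six_part {V Q} HQ {a b c d g h s}.
Arguments perp_part {V Q} HQ {a b c d g h y}.

Lemma Qsum (V : vectType 'F_2) (Q : V -> 'F_2) (HQ : quadratic_form Q) (X : seq V) :
  (forall i, (i < size X)%N -> Q X`_i = 0) ->
  (forall i j, (i < size X)%N -> (j < size X)%N -> i != j -> assoc_bil Q X`_i X`_j = 1) ->
  forall n, (n <= size X)%N -> Q (\sum_(i < n) X`_i) = ('C(n, 2))%:R.
Proof.
move=> HQX HBX; elim=> [|n IH] Hn; first by rewrite big_ord0 Q0.
rewrite big_ord_recr /= QD // IH ?(ltnW Hn) // HQX // addr0 Bsuml //.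
rewrite (eq_bigr (fun _ => 1)); last first.
  move=> i _; apply: HBX => //; first exact: ltn_trans (ltn_ord i) Hn.
  by rewrite neq_ltn ltn_ord.
by rewrite sumr_const card_ord binS bin1 natrD.
Qed.

Lemma dim_add_line (V : vectType 'F_2) (U : {vspace V}) (x : V) :
  (\dim (U + <[x]>) <= \dim U + 1)%N.
Proof.
apply: leq_trans (dimv_add_leqif U <[x]>) _.
by rewrite dim_vline leq_add2l leq_b1.
Qed.

Lemma memv_addl' (V : vectType 'F_2) (U W : {vspace V}) x : x \in U -> x \in (U + W)%VS.
Proof. exact: (subvP (addvSl U W)). Qed.
Lemma memv_addr' (V : vectType 'F_2) (U W : {vspace V}) x : x \in W -> x \in (U + W)%VS.
Proof. exact: (subvP (addvSr U W)). Qed.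

Theorem lemma3p2 (V : vectType 'F_2) (Q : V -> 'F_2)
  (HQ : quadratic_form Q) (Hnd : nondeg_qform Q)
  (W : {vspace V}) (d : nat)
  (HdimW : \dim W = d) (Hd2 : (2 <= d)%N) (Hdmod : (d %% 4 = 2)%N)
  (HW : has_symmetric_basis Q W)
  (a b c d' g h : V)
  (Hperp : forall x, x \in [:: a; b; c; d'; g; h] -> in_perp Q W x /\ x \notin W)
  (Hab : hyperbolic_pair Q a b) (Hcd : hyperbolic_pair Q c d')
  (Hgh : hyperbolic_pair Q g h)
  (Hp1 : pairs_perp Q a b c d') (Hp2 : pairs_perp Q a b g h)
  (Hp3 : pairs_perp Q c d' g h) :
  has_symmetric_basis Q (W + <[a]> + <[b]> + <[c]> + <[d']> + <[g]> + <[h]>)%VS.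
Proof.
move: HW => [X [HbX [HQX HBX]]].
case/andP: (HbX) => /eqP HspanX HfreeX.
have Hsz : size X = d by rewrite -HdimW -HspanX; symmetry; exact/eqP.
set q := (d %/ 4)%N.
have Hdq : d = ((q.*2).*2).+2 by rewrite -!muln2; rewrite {1}(divn_eq d 4) Hdmod; lia.
have HXW : forall i, X`_i \in W.
  move=> i; case: (ltnP i (size X)) => Hi.
    by rewrite -HspanX; apply: memv_span; apply: mem_nth.
  by rewrite nth_default // mem0v.
have BXx : forall i x, x \in [:: a; b; c; d'; g; h] -> assoc_bil Q X`_i x = 0.
  by move=> i x Hx; apply: (Hperp x Hx).1; exact: HXW.
set s := \sum_(i < d) X`_i.
have sW : s \in W by apply: rpred_sum => i _; exact: HXW.
have Bsx : forall x, x \in [:: a; b; c; d'; g; h] -> assoc_bil Q s x = 0.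
  by move=> x Hx; rewrite /s Bsuml //; apply: big1 => i _; exact: BXx.
have Qs : Q s = 1.
  rewrite /s Qsum // ?Hsz // natF2.
  suff -> : odd 'C(d, 2) by [].
  rewrite Hdq binS bin1 bin2odd; last by rewrite /= odd_double.
  by rewrite /= doubleK oddD oddM /= !odd_double.
have BXs : forall i, (i < d)%N -> assoc_bil Q X`_i s = 1.
  move=> i Hi; rewrite Bsym // /s Bsuml // (bigD1 (Ordinal Hi)) //= Bxx // add0r.
  rewrite (eq_bigr (fun _ => 1)); last first.
    move=> j Hj; apply: HBX => //; rewrite ?Hsz //.
  by rewrite sumr_const cardC1 card_ord natF2 Hdq /= odd_double.
set Y := [seq s + y | y <- hs a b c d' g h].
set Z := X ++ Y.
have szY : size Y = 6%N by rewrite size_map.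
have szZ : size Z = (d + 6)%N by rewrite size_cat szY Hsz.
have HQZ : forall i, (i < size Z)%N -> Q Z`_i = 0.
  move=> i; rewrite szZ => Hi; rewrite /Z nth_cat.
  case: ifP => Hi'; first exact: HQX.
  rewrite (nth_map 0); last by rewrite /= Hsz; lia.
  apply: (six_part HQ Hab Hcd Hgh Hp1 Hp2 Hp3 Qs Bsx (i - size X) 0 _ _).1 => //; rewrite Hsz; lia.
have HBZ : forall i j, (i < size Z)%N -> (j < size Z)%N -> i != j -> assoc_bil Q Z`_i Z`_j = 1.
  move=> i j; rewrite szZ => Hi Hj Hij; rewrite /Z !nth_cat.
  case: ifP => Hi'; case: ifP => Hj'.
  - exact: HBX.
  - rewrite (nth_map 0); last by rewrite /= Hsz; lia.
    rewrite BDr // BXs ?perp_part // ?addr0 //; last by rewrite -Hsz.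
    by move=> x Hx; apply: BXx.
  - rewrite (nth_map 0); last by rewrite /= Hsz; lia.
    rewrite Bsym // BDr // BXs ?perp_part // ?addr0 //; last by rewrite -Hsz.
    by move=> x Hx; apply: BXx.
  - rewrite !(nth_map 0) /=; try by rewrite Hsz; lia.
    have Hi2 := negbT Hi'; have Hj2 := negbT Hj'; rewrite -leqNgt Hsz in Hi2 Hj2.
    have Hk : (i - size X < 6)%N by rewrite Hsz; lia.
    have Hl : (j - size X < 6)%N by rewrite Hsz; lia.
    apply: (six_part HQ Hab Hcd Hgh Hp1 Hp2 Hp3 Qs Bsx _ _ Hk Hl).2.
    apply/eqP => E; move/eqP: Hij; apply; rewrite Hsz in E; lia.
have HfZ : free Z.
  apply: (@free_sym _ _ HQ Z _ HBZ).
  by rewrite szZ Hdq oddD /= odd_double.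
set W' := (W + <[a]> + <[b]> + <[c]> + <[d']> + <[g]> + <[h]>)%VS.
have WW : forall x, x \in W -> x \in W'.
  move=> x Hx; rewrite /W'; do 6 apply: memv_addl'; exact: Hx.
have sixW : forall x, x \in [:: a; b; c; d'; g; h] -> x \in W'.
  move=> x; rewrite !inE /W'.
  case/orP=> [/eqP->|]; first by do 5 apply: memv_addl'; apply: memv_addr'; apply: memv_line.
  case/orP=> [/eqP->|]; first by do 4 apply: memv_addl'; apply: memv_addr'; apply: memv_line.
  case/orP=> [/eqP->|]; first by do 3 apply: memv_addl'; apply: memv_addr'; apply: memv_line.
  case/orP=> [/eqP->|]; first by do 2 apply: memv_addl'; apply: memv_addr'; apply: memv_line.
  case/orP=> [/eqP->|]; first by do 1 apply: memv_addl'; apply: memv_addr'; apply: memv_line.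
  by move/eqP->; apply: memv_addr'; apply: memv_line.
have inW : forall x, x \in [:: a; b; c; d'; g; h] -> x \in W'.
  exact: sixW.
exists Z; split; last by split.
rewrite /basis_of HfZ andbT eqEdim; apply/andP; split.
  apply/span_subvP => z; rewrite mem_cat => /orP [Hz | /mapP [y Hy ->]].
    by apply: WW; rewrite -HspanX; apply: memv_span.
  apply: rpredD; first exact: WW.
  move: Hy; rewrite !inE.
  do 5 (case/orP=> [/eqP->|]; first by repeat apply: rpredD; apply: inW; rewrite !inE eqxx ?orbT).
  by move/eqP->; repeat apply: rpredD; apply: inW; rewrite !inE eqxx ?orbT.
rewrite (eqP HfZ) szZ /W' -HdimW.
have := @dim_add_line _ W a; have := @dim_add_line _ (W + <[a]>)%VS b.
have := @dim_add_line _ (W + <[a]> + <[b]>)%VS c.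
have := @dim_add_line _ (W + <[a]> + <[b]> + <[c]>)%VS d'.
have := @dim_add_line _ (W + <[a]> + <[b]> + <[c]> + <[d']>)%VS g.
have := @dim_add_line _ (W + <[a]> + <[b]> + <[c]> + <[d']> + <[g]>)%VS h.
lia.
Qed.
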